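(* Let $n\ge 2$ and let $NF_n$ be the complex Leibniz algebra with basis $\{e_1,\dots,e_n\}$ and nonzero products $[e_i,e_1]=e_{i+1}$, $1\le i\le n-1$. A pair $(d,D)$ of linear maps of $NF_n$ is a biderivation if and only if there exist $\alpha_1,\dots,\alpha_n,\beta_2,\dots,\beta_n\in\mathbb C$ such that $$d(e_i)=i\alpha_1e_i+\sum_{j=i+1}^n\alpha_{j-i+1}e_j\ (1\le i\le n),\qquad D(e_1)=\alpha_1e_1+\sum_{j=2}^n\beta_je_j,\qquad D(e_i)=0\ (2\le i\le n).$$
   Context: All algebras are over $\mathbb C$. A (right) Leibniz algebra is a vector space $L$ with bilinear bracket satisfying $[x,[y,z]]=[[x,y],z]-[[x,z],y]$. Unlisted products of basis elements are zero. A derivation is a linear map $d$ with $d([x,y])=[d(x),y]+[x,d(y)]$; an anti-derivation is a linear map $D$ with $D([x,y])=[D(x),y]-[D(y),x]$. A biderivation of $L$ is a pair $(d,D)$ with $d$ a derivation, $D$ an anti-derivation, and $[x,d(y)]=[x,D(y)]$ for all $x,y\in L$. *)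

(* Defs.v *)
From HB Require Import structures.
From mathcomp Require Import all_boot all_order all_algebra.
From mathcomp Require Import complex.
From mathcomp Require Import Rstruct.
From Stdlib Require Rdefinitions.
Set Implicit Arguments. Unset Strict Implicit. Unset Printing Implicit Defensive.
Import Order.TTheory GRing.Theory Num.Theory.
Local Open Scope ring_scope.

Definition CC : fieldType := Rdefinitions.R[i].

Section Generic.
Variables (F : fieldType) (V : lmodType F) (br : V -> V -> V).

Definition is_derivation (d : V -> V) : Prop :=
  forall x y, d (br x y) = br (d x) y + br x (d y).

Definition is_antiderivation (D : V -> V) : Prop :=
  forall x y, D (br x y) = br (D x) y - br (D y) x.

Definition is_biderivation (d D : V -> V) : Prop :=
  [/\ is_derivation d, is_antiderivation D & forall x y, br x (d y) = br x (D y)].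
End Generic.

(* The underlying space of NF_n is CC^n, as row vectors; basis e_1..e_n
   (1-based: e k has a 1 in column k-1). *)
Definition e (n k : nat) : 'rV[CC]_n := \row_(j < n) (j.+1 == k)%:R.

(* Bracket of NF_n: bilinear extension of [e_i, e_1] = e_{i+1} (1 <= i <= n-1),
   all other products of basis elements zero.  Coordinates x 0 j are the
   coefficient of e_{j+1}. *)
Definition NFbr (n : nat) (x y : 'rV[CC]_n) : 'rV[CC]_n :=
  \sum_(i < n) \sum_(j < n)
     (x 0 i * y 0 j) *: (if ((j.+1 == 1)%N && (i.+1 <= n - 1)%N) then e n i.+2 else 0).

(* Main.v *)
Require Import Defs.
From mathcomp Require Import all_boot all_order all_algebra zify.
Import GRing.Theory.
Local Open Scope ring_scope.
Set Implicit Arguments. Unset Strict Implicit.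

Section Help.
Variable m : nat.
Local Notation V := 'rV[CC]_(m.+2).

Definition cf (x : V) (j : nat) : CC := \sum_(i < m.+2) ((i == j :> nat)%:R * x 0 i).
Definition shift (x : V) : V := \sum_(i < m.+2) x 0 i *: e (m.+2) i.+2.
Definition G (a : CC) (c : nat -> CC) (i j : nat) : CC :=
  i%:R * a * (j.+1 == i)%:R + (if (i <= j)%N then c (j.+1 - i)%N else 0).

Lemma sum_delta (F : 'I_(m.+2) -> CC) j :
  \sum_(i < m.+2) (i == j :> nat)%:R * F i = if (j < m.+2)%N then F (inord j) else 0.
Proof.
case: ifP => hj.
  rewrite (bigD1 (inord j)) // inordK // eqxx mul1r big1 //= ?addr0 // => i hi.
  rewrite (_ : (i == j :> nat) = false) ?mul0r //.
  apply/negbTE; apply: contra hi => /eqP hij; apply/eqP/val_inj; rewrite /= inordK // hij.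
rewrite big1 // => i _; rewrite (_ : (i == j :> nat) = false) ?mul0r //.
apply/negbTE/eqP => hij; move: (ltn_ord i); by rewrite hij hj.
Qed.

Lemma cf_ord (x : V) (i : 'I_(m.+2)) : cf x i = x 0 i.
Proof. by rewrite /cf sum_delta ltn_ord; congr (x 0 _); apply/val_inj; rewrite /= inordK. Qed.

Lemma eq_cf (x y : V) : (forall j, (j < m.+2)%N -> cf x j = cf y j) -> x = y.
Proof. by move=> H; apply/rowP => i; rewrite -!cf_ord; apply: H. Qed.

Lemma cfD (x y : V) j : cf (x + y) j = cf x j + cf y j.
Proof. by rewrite /cf -big_split; apply eq_bigr => i _; rewrite mxE mulrDr. Qed.
Lemma cfZ a (x : V) j : cf (a *: x) j = a * cf x j.
Proof. by rewrite /cf mulr_sumr; apply eq_bigr => i _; rewrite mxE mulrCA. Qed.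
Lemma cf0 j : cf 0 j = 0.
Proof. by rewrite /cf big1 // => i _; rewrite mxE mulr0. Qed.
Lemma cf_sum (I : Type) (r : seq I) (P : pred I) (F : I -> V) j :
  cf (\sum_(i <- r | P i) F i) j = \sum_(i <- r | P i) cf (F i) j.
Proof.
apply: (big_rec2 (fun a b => cf b j = a)); first exact: cf0.
by move=> i y1 y2 _ <-; rewrite cfD.
Qed.

Lemma cf_e k j : cf (e (m.+2) k) j = ((j < m.+2)%N && (j.+1 == k))%:R.
Proof. by rewrite /cf sum_delta; case: ifP => hj //=; rewrite /e mxE inordK. Qed.

Lemma e_out k : (k = 0 \/ m.+2 < k)%N -> e (m.+2) k = 0.
Proof.
move=> hk; apply eq_cf => j hj; rewrite cf_e cf0 hj /=.
case: eqP => // hjk; exfalso; lia.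
Qed.

Lemma decomp (x : V) : x = \sum_(i < m.+2) x 0 i *: e (m.+2) i.+1.
Proof.
apply eq_cf => j hj; rewrite cf_sum /cf; apply eq_bigr => i _.
by rewrite -/(cf _ _) cfZ cf_e hj /= eqSS eq_sym mulrC.
Qed.

Lemma cf_shift (x : V) j : (j < m.+2)%N -> cf (shift x) j = if j is j'.+1 then cf x j' else 0.
Proof.
move=> hj; rewrite /shift cf_sum.
under eq_bigr do rewrite cfZ cf_e hj /=.
case: j hj => [|j] hj; first by rewrite big1 // => i _; rewrite mulr0.
by rewrite /cf; apply eq_bigr => i _; rewrite !eqSS eq_sym mulrC.
Qed.

Lemma shiftD (x y : V) : shift (x + y) = shift x + shift y.
Proof. by apply eq_cf => j hj; rewrite cfD !cf_shift //; case: j hj => [|j] _; rewrite ?cfD ?addr0. Qed.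
Lemma shiftZ a (x : V) : shift (a *: x) = a *: shift x.
Proof. by apply eq_cf => j hj; rewrite cfZ !cf_shift //; case: j hj => [|j] _; rewrite ?cfZ ?mulr0. Qed.
Lemma shift0 : shift 0 = 0.
Proof. by apply eq_cf => j hj; rewrite cf_shift //; case: j hj => [|j] _; rewrite !cf0. Qed.
Lemma shift_sum (I : Type) (r : seq I) (P : pred I) (F : I -> V) :
  shift (\sum_(i <- r | P i) F i) = \sum_(i <- r | P i) shift (F i).
Proof.
apply: (big_rec2 (fun a b => shift b = a)); first exact: shift0.
by move=> i y1 y2 _ <-; rewrite shiftD.
Qed.

Lemma shift_e k : (1 <= k)%N -> shift (e (m.+2) k) = e (m.+2) k.+1.
Proof.
move=> hk; apply eq_cf => j hj; rewrite cf_shift //; case: j hj => [|j] hj; rewrite !cf_e.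
  by rewrite /=; case: k hk.
by rewrite hj /= eqSS (ltn_trans (ltnSn j) hj).
Qed.

Lemma NFbr_shift (x y : V) : NFbr x y = cf y 0 *: shift x.
Proof.
have -> : cf y 0 = y 0 ord0 by exact: (cf_ord y ord0).
rewrite /NFbr /shift scaler_sumr; apply eq_bigr => i _.
rewrite big_ord_recl big1 /=; last by move=> j _; rewrite scaler0.
rewrite addr0.
case: ifP => hi; first by rewrite scalerA mulrC.
rewrite e_out ?scaler0 //; right; move: (ltn_ord i) hi => hi' hi; lia.
Qed.

Lemma Gstep a c k j : (1 <= k)%N ->
  G a c k.+1 j = (if j is j'.+1 then G a c k j' else 0) + a * (j == k)%:R.
Proof.
move=> hk; rewrite /G; case: j => [|j].
  have -> : (1%N == k.+1) = false by case: k hk.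
  have -> : (0%N == k) = false by case: k hk.
  by rewrite /= !mulr0 ?add0r ?addr0.
rewrite !eqSS (_ : (k < j.+1)%N = (k <= j)%N) // subSS.
case: eqP => [<-|_]; last by rewrite !mulr0 !add0r addr0.
by rewrite ltnn !mulr1 !addr0 -(addn1 j.+1) natrD mulrDl mul1r.
Qed.

Lemma cf_natsum (f : nat -> CC) lo hi j : (j < m.+2)%N ->
  cf (\sum_(lo <= k < hi) f k *: e (m.+2) k) j = if (lo <= j.+1 < hi)%N then f j.+1 else 0.
Proof.
move=> hj; rewrite cf_sum.
under eq_bigr do rewrite cfZ cf_e hj /=.
case: ifP => hin.
  rewrite (bigD1_seq j.+1) ?mem_index_iota ?iota_uniq // eqxx mulr1 big1 /= ?addr0 // => k hk.
  by rewrite eq_sym (negbTE hk) mulr0.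
rewrite big1_seq // => k /andP[_ hk]; rewrite mem_index_iota in hk.
have /negbTE -> : j.+1 != k by apply: contraFN hin => /eqP ->.
by rewrite mulr0.
Qed.

Lemma cf_dform (alpha : nat -> CC) i j : (1 <= i <= m.+2)%N -> (j < m.+2)%N ->
  cf ((i%:R * alpha 1%N) *: e (m.+2) i
      + \sum_(i.+1 <= k < m.+3) alpha (k - i + 1)%N *: e (m.+2) k) j
  = G (alpha 1%N) (fun t => alpha t.+1) i j.
Proof.
move=> /andP[h1 h2] hj; rewrite cfD cfZ cf_e cf_natsum // hj /G /=.
rewrite (_ : (i < j.+1 < m.+3)%N = (i <= j)%N); last by lia.
by case: ifP => // _; rewrite addn1.
Qed.
Lemma scaleC2 (a b : CC) (v : V) : a *: (b *: v) = b *: (a *: v).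
Proof. by rewrite !scalerA mulrC. Qed.
End Help.

Unset Implicit Arguments.
Theorem mainTheorem2 (n : nat) (hn : (2 <= n)%N)
    (d D : {linear 'rV[CC]_n -> 'rV[CC]_n}) :
  is_biderivation (@NFbr n) d D <->
  exists (alpha beta : nat -> CC),
    [/\ (forall i : nat, (1 <= i <= n)%N ->
           d (e n i) = (i%:R * alpha 1%N) *: e n i
                       + \sum_(i.+1 <= j < n.+1) alpha (j - i + 1)%N *: e n j),
        D (e n 1) = alpha 1%N *: e n 1 + \sum_(2 <= j < n.+1) beta j *: e n j
      & (forall i : nat, (2 <= i <= n)%N -> D (e n i) = 0)].
Proof.
case: n hn d D => [|[|m]] // _ d D.
have cfe10 : cf (e m.+2 1%N) 0 = 1 by rewrite cf_e.
split.
- case=> hder hanti hcond.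
  pose a := cf (d (e m.+2 1%N)) 0.
  pose c := cf (d (e m.+2 1%N)).
  have dstep : forall k, (1 <= k < m.+2)%N ->
      d (e m.+2 k.+1) = shift (d (e m.+2 k)) + a *: e m.+2 k.+1.
    move=> k /andP[hk1 hk2]; have := hder (e m.+2 k) (e m.+2 1%N).
    by rewrite !NFbr_shift cfe10 !scale1r shift_e.
  have dG : forall i, (1 <= i <= m.+2)%N -> forall j, (j < m.+2)%N ->
      cf (d (e m.+2 i)) j = G a c i j.
    elim=> [//|i IH] /andP[_ hi] j hj.
    case: i IH hi => [|i] IH hi.
      rewrite /G /c /a; case: j hj => [|j] hj /=.
        by rewrite mul1r mulr1 addr0.
      by rewrite mulr0 add0r subn1.
    rewrite dstep; last by lia.
    rewrite cfD cfZ cf_shift // cf_e hj /= eqSS Gstep //.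
    case: j hj => [|j] hj; first by [].
    by rewrite IH //; lia.
  have hF : cf (d (e m.+2 1%N)) 0 = cf (D (e m.+2 1%N)) 0.
    have := hcond (e m.+2 1%N) (e m.+2 1%N); rewrite !NFbr_shift shift_e // => /(congr1 (fun v : 'rV[CC]_m.+2 => cf v 1%N)).
    by rewrite !cfZ cf_e /= !mulr1.
  exists (fun t => c t.-1), (fun t => cf (D (e m.+2 1%N)) t.-1); split.
  + move=> i hi; apply eq_cf => j hj; by rewrite dG // (cf_dform (fun t => c t.-1)) // (_ : G a c i j = G a (fun t => c t) i j).
  + apply eq_cf => j hj; rewrite cfD cfZ cf_e cf_natsum // hj.
    case: j hj => [|j] hj /=; first by rewrite mulr1 addr0.
    by rewrite mulr0 add0r ltnS hj.
  + move=> i /andP[h1 h2].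
    case: i h1 h2 => [|k] // h1 h2.
    have := hanti (e m.+2 k) (e m.+2 1%N).
    rewrite !NFbr_shift cfe10 scale1r shift_e; last by lia.
    move=> ->; rewrite scale1r.
    case: k h1 h2 => [|[|k]] // h1 h2; first by rewrite cf_e /= scale1r subrr.
    have := hanti (e m.+2 1%N) (e m.+2 k.+2).
    rewrite !NFbr_shift !cf_e /= !scale0r linear0 scale1r sub0r subr0.
    by move=> h; rewrite -[LHS]opprK -h oppr0.
- case=> alpha [beta [hd hD1 hD0]].
  pose a := alpha 1%N.
  pose c := fun t => alpha t.+1.
  have dG : forall i, (1 <= i <= m.+3)%N -> forall j, (j < m.+2)%N ->
      cf (d (e m.+2 i)) j = G a c i j.
    move=> i /andP[h1 h2] j hj.
    case: (ltnP m.+2 i) => hi.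
      have -> : i = m.+3 by lia.
      rewrite e_out; last by right.
      rewrite linear0 cf0 /G.
      rewrite (_ : (j.+1 == m.+3) = false); last by apply/negbTE; lia.
      by rewrite (_ : (m.+3 <= j)%N = false) ?mulr0 ?addr0 //; lia.
    by rewrite hd ?cf_dform //; apply/andP.
  have cfd0 : forall y, cf (d y) 0 = a * cf y 0.
    move=> y; rewrite {1}(decomp y) linear_sum cf_sum /cf mulr_sumr.
    apply eq_bigr => i _; have hi := ltn_ord i.
    rewrite linearZ -/(cf _ _) cfZ dG; [|lia|lia].
    rewrite /G; move: (nat_of_ord i) (y 0 i) => k yk; case: k => [|k] /=.
      by rewrite mul1r !mulr1 addr0 mul1r mulrC.
    by rewrite !mulr0 addr0 mul0r !mulr0.
  have ds_basis : forall i : 'I_m.+2,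
      d (e m.+2 i.+2) = shift (d (e m.+2 i.+1)) + a *: e m.+2 i.+2.
    move=> i; have hi := ltn_ord i.
    apply eq_cf => j hj; rewrite cfD cfZ cf_shift // cf_e hj /= dG; [|lia|lia].
    rewrite Gstep // eqSS; case: j hj => [|j] hj //.
    rewrite dG //; lia.
  have dshift : forall x, d (shift x) = shift (d x) + a *: shift x.
    move=> x.
    have e1 : shift (d x) = \sum_(i < m.+2) x 0 i *: shift (d (e m.+2 i.+1)).
      by rewrite {1}(decomp x) linear_sum shift_sum; apply eq_bigr => l _; rewrite linearZ shiftZ.
    have e2 : a *: shift x = \sum_(i < m.+2) x 0 i *: (a *: e m.+2 i.+2).
      by rewrite /shift scaler_sumr; apply eq_bigr => l _; rewrite !scalerA mulrC.
    rewrite e1 e2 -big_split {1}/shift linear_sum; apply eq_bigr => l _.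
    by rewrite linearZ /= ds_basis scalerDr.
  have hDx : forall x, D x = cf x 0 *: D (e m.+2 1%N).
    move=> x; rewrite {1}(decomp x) linear_sum big_ord_recl big1 /=.
      by rewrite addr0 linearZ (cf_ord x ord0).
    move=> i _; rewrite linearZ /= hD0 ?scaler0 //.
    by have := ltn_ord i; rewrite /bump /=; lia.
  have hDshift : forall x, D (shift x) = 0.
    by move=> x; rewrite hDx cf_shift // scale0r.
  have cfD10 : cf (D (e m.+2 1%N)) 0 = a.
    rewrite hD1 cfD cfZ cf_e cf_natsum //= mulr1 addr0 //.
  have cfd0' : forall y, cf (d y) 0 = cf y 0 * a.
    by move=> y; rewrite cfd0 mulrC.
  have k1 : forall x y : 'rV[CC]_m.+2, d (NFbr x y) = NFbr (d x) y + NFbr x (d y).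
    by move=> x y; rewrite !NFbr_shift linearZZ dshift cfd0' scalerDr scalerA.
  have k2 : forall x y : 'rV[CC]_m.+2, D (NFbr x y) = NFbr (D x) y - NFbr (D y) x.
    move=> x y; rewrite !NFbr_shift linearZZ hDshift scaler0 (hDx x) (hDx y) !shiftZ.
    by rewrite scaleC2 subrr.
  have k3 : forall x y : 'rV[CC]_m.+2, NFbr x (d y) = NFbr x (D y).
    by move=> x y; rewrite !NFbr_shift cfd0' (hDx y) cfZ cfD10.
  by split; [exact: k1 | exact: k2 | exact: k3].
Qed.
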